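(* Let $P(z^1,\dots,z^d)$ be a polynomial in $d$ variables with real coefficients. The $N\times N$ matrix $P(W^{(1)},\dots,W^{(d)})$ has full rank $N$ if and only if the constant term of $P$ is nonzero.
   Context: For $k=1,\dots,d$, $a_k=x^k_0<\dots<x^k_{n_k}=b_k$ is a partition of $[a_k,b_k]$ with $n_k\ge1$, $l^k_j$ its Lagrange basis polynomials, and $\hat Z^{(k)}$ the $(n_k+1)\times(n_k+1)$ matrix with $\hat Z^{(k)}_{j,i}=(l^k_i)'(x^k_j)$. $N=(n_1+1)\cdots(n_d+1)$ and $W^{(\alpha)}=I_{n_1+1}\otimes\dots\otimes I_{n_{\alpha-1}+1}\otimes\hat Z^{(\alpha)}\otimes I_{n_{\alpha+1}+1}\otimes\dots\otimes I_{n_d+1}$ (these matrices pairwise commute, so $P(W^{(1)},\dots,W^{(d)})$ is well defined, the constant term being multiplied by the $N\times N$ identity). *)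

(* Defs.v *)
From HB Require Import structures.
From mathcomp Require Import all_boot all_order all_algebra.
Set Implicit Arguments. Unset Strict Implicit. Unset Printing Implicit Defensive.
Import Order.TTheory GRing.Theory Num.Theory.
Local Open Scope ring_scope.

(* Decomposition of a row-major index of 'I_(m*n) into a pair (i, j),
   i.e. the index i*n + j corresponds to (i, j); inverse of mxvec_index. *)
Definition kidx (m n : nat) (k : 'I_(m * n)) : 'I_m * 'I_n :=
  enum_val (cast_ord (esym (mxvec_cast m n)) k).

Lemma kidx_mxvec_index (m n : nat) (i : 'I_m) (j : 'I_n) :
  kidx (mxvec_index i j) = (i, j).
Proof. by rewrite /kidx /mxvec_index cast_ordK enum_rankK. Qed.

Definition kron (R : pzRingType) m1 n1 m2 n2
  (A : 'M[R]_(m1, n1)) (B : 'M[R]_(m2, n2)) : 'M[R]_(m1 * m2, n1 * n2) :=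
  \matrix_(i, j) (A (kidx i).1 (kidx j).1 * B (kidx i).2 (kidx j).2).

Definition lagr (R : fieldType) (n : nat) (x : nat -> R) (i : nat) : {poly R} :=
  \prod_(m < n.+1 | (m : nat) != i) (('X - (x m)%:P) * ((x i - x m)^-1)%:P).

Definition Zhat (R : fieldType) (n : nat) (x : nat -> R) : 'M[R]_(n.+1) :=
  \matrix_(j, i) ((lagr n x i)^`()).[x j].

Fixpoint Ndim (n : nat -> nat) (d : nat) : nat :=
  if d is d'.+1 then (Ndim n d' * (n d').+1)%N else 1%N.

(* W^(alpha) = I (x) ... (x) I (x) Zhat^(alpha) (x) I (x) ... (x) I  (d factors,
   alpha is 0-based: alpha < d; x k are the nodes of the k-th partition,
   n k its number of subintervals). *)
Fixpoint Wmat (R : fieldType) (n : nat -> nat) (x : nat -> nat -> R)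
  (d alpha : nat) : 'M[R]_(Ndim n d) :=
  if d is d'.+1 then
    if alpha == d' then kron (1%:M : 'M[R]_(Ndim n d')) (Zhat (n d') (x d'))
    else kron (Wmat n x d' alpha) (1%:M : 'M[R]_((n d').+1))
  else 1%:M.

(* A real polynomial in d variables, given by its coefficients c e on
   exponent vectors e : 'I_d -> {0..D} (every polynomial is of this form for
   D large enough), evaluated at the commuting matrices W^(1..d). *)
Definition polyW (R : fieldType) (n : nat -> nat) (x : nat -> nat -> R)
  (d D : nat) (c : {ffun 'I_d -> 'I_D.+1} -> R) : 'M[R]_(Ndim n d) :=
  \sum_(e : {ffun 'I_d -> 'I_D.+1})
     c e *: \prod_(k < d) (Wmat n x d k) ^+ (e k).

Definition const_exp (d D : nat) : {ffun 'I_d -> 'I_D.+1} := [ffun _ => ord0].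

(* Main.v *)
Require Import Defs.
From HB Require Import structures.
From mathcomp Require Import all_boot all_order all_algebra.
Set Implicit Arguments. Unset Strict Implicit. Unset Printing Implicit Defensive.
Import Order.TTheory GRing.Theory Num.Theory.
Local Open Scope ring_scope.

Section Kron.
Variable R : fieldType.

Lemma mxvec_index_kidx m n (k : 'I_(m * n)) :
  mxvec_index (kidx k).1 (kidx k).2 = k.
Proof. by rewrite /kidx /mxvec_index -surjective_pairing enum_valK cast_ordKV. Qed.

Lemma kidx_inj m n : injective (@kidx m n).
Proof. by move=> k1 k2 e; rewrite -(mxvec_index_kidx k1) e mxvec_index_kidx. Qed.

Lemma sum_kidx m n (F : 'I_m -> 'I_n -> R) :
  \sum_(k : 'I_(m * n)) F (kidx k).1 (kidx k).2 = \sum_i \sum_j F i j.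
Proof.
rewrite pair_big (reindex (fun p : 'I_m * 'I_n => mxvec_index p.1 p.2)) /=.
  by apply: eq_bigr => p _; rewrite kidx_mxvec_index.
exists (@kidx m n) => [p _|k _]; last exact: mxvec_index_kidx.
by rewrite kidx_mxvec_index -surjective_pairing.
Qed.

Lemma kron_mul m1 n1 p1 m2 n2 p2 (A : 'M[R]_(m1, n1)) (B : 'M[R]_(m2, n2))
  (C : 'M[R]_(n1, p1)) (D : 'M[R]_(n2, p2)) :
  kron A B *m kron C D = kron (A *m C) (B *m D).
Proof.
apply/matrixP => i j; rewrite !mxE.
rewrite (eq_bigr (fun k => (A (kidx i).1 (kidx k).1 * C (kidx k).1 (kidx j).1) *
   (B (kidx i).2 (kidx k).2 * D (kidx k).2 (kidx j).2))); last first.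
  by move=> k _; rewrite !mxE mulrACA.
rewrite (sum_kidx (fun a b => (A (kidx i).1 a * C a (kidx j).1) *
   (B (kidx i).2 b * D b (kidx j).2))).
rewrite big_distrl /=; apply: eq_bigr => a _; rewrite big_distrr /=.
by apply: eq_bigr.
Qed.

Lemma kron11 m n : kron (1%:M : 'M[R]_m) (1%:M : 'M[R]_n) = 1%:M.
Proof.
apply/matrixP => i j; rewrite !mxE -natrM mulnb.
rewrite -(inj_eq (@kidx_inj m n)) [kidx i]surjective_pairing.
by rewrite [kidx j]surjective_pairing xpair_eqE.
Qed.

Lemma kron0l m1 n1 m2 n2 (B : 'M[R]_(m2, n2)) : kron (0 : 'M[R]_(m1, n1)) B = 0.
Proof. by apply/matrixP => i j; rewrite !mxE mul0r. Qed.
Lemma kron0r m1 n1 m2 n2 (A : 'M[R]_(m1, n1)) : kron A (0 : 'M[R]_(m2, n2)) = 0.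
Proof. by apply/matrixP => i j; rewrite !mxE mulr0. Qed.

Lemma kronX m n (A : 'M[R]_m) (B : 'M[R]_n) k :
  (kron A B) ^+ k = kron (A ^+ k) (B ^+ k).
Proof.
elim: k => [|k IH]; first by rewrite !expr0 -!idmxE kron11.
by rewrite !exprS IH -!mulmxE kron_mul.
Qed.
End Kron.


Section W.
Variables (R : fieldType) (n : nat -> nat) (x : nat -> nat -> R).

Lemma Wmat_comm d a b : (a < d)%N -> (b < d)%N ->
  GRing.comm (Wmat n x d a) (Wmat n x d b).
Proof.
elim: d a b => [//|d IH] a b /=; rewrite !ltnS => ha hb.
rewrite /GRing.comm -!mulmxE.
case: eqP => [ea|/eqP na]; case: eqP => [eb|/eqP nb]; rewrite ?kron_mul //.
- by rewrite !mul1mx !mulmx1.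
- by rewrite !mul1mx !mulmx1.
have ha' : (a < d)%N by rewrite ltn_neqAle na ha.
have hb' : (b < d)%N by rewrite ltn_neqAle nb hb.
by rewrite !mulmxE (IH a b ha' hb').
Qed.

Lemma Wmat_nil d a : (a < d)%N ->
  Zhat (n a) (x a) ^+ (n a).+1 = 0 -> Wmat n x d a ^+ (n a).+1 = 0.
Proof.
elim: d => [//|d IH]; rewrite ltnS => ha hZ /=.
case: eqP => [ea|/eqP na].
  by rewrite kronX -ea hZ kron0r.
have ha' : (a < d)%N by rewrite ltn_neqAle na ha.
by rewrite kronX (IH ha' hZ) kron0l.
Qed.
End W.


Section Z.
Variables (R : fieldType) (n : nat) (x : nat -> R).
Hypothesis hx : forall i j, (i <= n)%N -> (j <= n)%N -> x i = x j -> i = j.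

Lemma size_deriv_le (p : {poly R}) : (size p^`() <= size p)%N.
Proof. by rewrite /deriv; apply: leq_trans (size_poly _ _) (leq_pred _). Qed.

Lemma lagr_eval (i j : nat) : (i <= n)%N -> (j <= n)%N ->
  (lagr n x i).[x j] = (i == j)%:R.
Proof.
move=> hi hj; rewrite /lagr horner_prod.
under eq_bigr => m _ do rewrite hornerM hornerXsubC hornerC.
case: eqP => [<-|/eqP nij].
  apply: big1 => m hm; apply: divff; rewrite subr_eq0; apply/eqP => e.
  by move: hm; rewrite (hx hi _ e) ?eqxx // -ltnS.
have hj' : (j < n.+1)%N by [].
rewrite (bigD1 (Ordinal hj')) /=; last by rewrite eq_sym.
by rewrite subrr mul0r mul0r.
Qed.

Lemma size_lagr i : (i <= n)%N -> (size (lagr n x i) <= n.+1)%N.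
Proof.
move=> hi; rewrite /lagr.
have H : forall (P : pred 'I_n.+1) (F : 'I_n.+1 -> {poly R}),
  (forall m, size (F m) <= 2)%N ->
  (size (\prod_(m | P m) F m)%R <= (\sum_(m | P m) 1)%N.+1)%N.
  move=> P F hF; elim/big_rec2: _ => [|m s p _ hp]; first by rewrite size_poly1. apply: leq_trans (size_mul_leq _ _) _.
  have := hF m; case: (size (F m)) => [|[|[|]]] //= _; rewrite ?add0n ?add1n.
  - exact: leq_trans (leq_pred _) (leqW hp).
  - exact: leqW hp.
apply: leq_trans (H _ _ _) _.
  move=> m; apply: leq_trans (size_mul_leq _ _) _.
  by rewrite size_XsubC; have := size_polyC_leq1 ((x i - x m)^-1); case: (size _) => [|[|]].
rewrite ltnS.
have hi' : (i < n.+1)%N by [].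
have e : (\sum_(m < n.+1) 1 = n.+1)%N by rewrite sum1_card card_ord.
rewrite (bigD1 (Ordinal hi')) //= add1n in e; case: e => e.
by rewrite -[X in (_ <= X)%N]e; apply/eq_leq/eq_bigl.
Qed.

Lemma interp (q : {poly R}) : (size q <= n.+1)%N ->
  q = \sum_(i < n.+1) q.[x i] *: lagr n x i.
Proof.
move=> hq; apply/eqP; rewrite -subr_eq0; apply/negPn/negP => nz.
set r := q - _ in nz.
have hr : (size r <= n.+1)%N.
  apply: leq_trans (size_polyD _ _) _; rewrite size_polyN geq_max hq /=.
  apply: leq_trans (size_sum _ _ _) _; apply/bigmax_leqP => i _.
  exact: leq_trans (size_scale_leq _ _) (size_lagr (ltn_ord i)).
have hall : all (root r) [seq x i | i <- iota 0 n.+1].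
  apply/allP => y /mapP [i]; rewrite mem_iota add0n => /andP[_ hi] ->.
  rewrite /root /r hornerD hornerN horner_sum subr_eq0.
  rewrite (bigD1 (Ordinal hi)) // big1 => [|j hj]; first by rewrite Monoid.mulm1 hornerZ (lagr_eval hi hi) eqxx mulr1; apply/eqP.
  rewrite hornerZ (lagr_eval (ltn_ord j) hi).
  have -> : ((j : nat) == i) = false by apply/negbTE; exact: hj.
  by rewrite mulr0.
have hu : uniq [seq x i | i <- iota 0 n.+1].
  rewrite map_inj_in_uniq ?iota_uniq // => a b; rewrite !mem_iota !add0n.
  by move=> /andP[_ ha] /andP[_ hb]; apply: hx.
by have := max_poly_roots nz hall hu; rewrite size_map size_iota ltnNge hr.
Qed.

Lemma deriv_sum m (F : 'I_m -> {poly R}) :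
  (\sum_(i < m) F i)^`() = \sum_(i < m) (F i)^`().
Proof.
elim/big_rec2: _ => [|i a p _ <-]; first exact: deriv0.
exact: derivD.
Qed.

Definition phi (q : {poly R}) : 'cV[R]_n.+1 := \col_(j < n.+1) q.[x j].

Lemma Zhat_phi (q : {poly R}) : (size q <= n.+1)%N -> Zhat n x *m phi q = phi q^`().
Proof.
move=> hq; apply/matrixP => j k; rewrite !mxE.
rewrite [in RHS](interp hq) deriv_sum horner_sum; apply: eq_bigr => i _.
by rewrite !mxE derivZ hornerZ mulrC.
Qed.

Lemma Zhat_pow k (q : {poly R}) : (size q <= n.+1)%N -> Zhat n x ^+ k *m phi q = phi q^`(k).
Proof.
elim: k q => [|k IH] q hq; first by rewrite expr0 -idmxE mul1mx derivn0.
rewrite exprSr -mulmxE -mulmxA (Zhat_phi hq).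
by rewrite (IH _ (leq_trans (size_deriv_le _) hq)) derivSn.
Qed.

Lemma Zhat_nil : Zhat n x ^+ n.+1 = 0.
Proof.
apply/matrixP => i j.
have e : phi (lagr n x j) = delta_mx j 0.
  apply/matrixP => a b; rewrite !mxE (lagr_eval (ltn_ord j) (ltn_ord a)).
  by rewrite [b]ord1 eqxx andbT eq_sym.
have := congr1 (fun M : 'M[R]_(n.+1, 1) => M i 0) (colE j (Zhat n x ^+ n.+1)).
rewrite -e (Zhat_pow _ (size_lagr (ltn_ord j))) (derivn_poly0 (size_lagr (ltn_ord j))).
rewrite !mxE horner0 => ->.
by [].
Qed.
End Z.


Section Alg.
Variables (K : fieldType) (N : nat).
Local Notation T := 'M[K]_N.
Variables (d : nat) (W : 'I_d -> T).

Lemma sAl c (A B : T) : c *: (A * B) = (c *: A) * B.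
Proof. exact: scalemxAl. Qed.
Lemma sAr c (A B : T) : c *: (A * B) = A * (c *: B).
Proof. exact: scalemxAr. Qed.
Lemma exprZ c (A : T) m : (c *: A) ^+ m = c ^+ m *: A ^+ m.
Proof.
elim: m => [|m IH]; first by rewrite !expr0 scale1r.
by rewrite !exprS IH -sAr -sAl scalerA mulrC.
Qed.
Hypothesis Wc : forall a b, GRing.comm (W a) (W b).
Hypothesis Wn : forall a, exists m, W a ^+ m = 0.

Definition CW (A : T) := forall k, GRing.comm A (W k).
Definition Bic (A : T) := forall B, CW B -> GRing.comm A B.
Definition Nilp (A : T) := exists m, A ^+ m = 0.

Lemma bicW a : Bic (W a).
Proof. by move=> B hB; apply: commr_sym. Qed.

Lemma bic_C A : Bic A -> CW A.
Proof. by move=> hA k; apply: hA => j; apply: Wc. Qed.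

Lemma bic_comm A B : Bic A -> Bic B -> GRing.comm A B.
Proof. by move=> hA hB; apply: hA; apply: bic_C. Qed.

Lemma bic1 : Bic 1.
Proof. by move=> B _; apply/commr_sym/commr1. Qed.
Lemma bic0 : Bic 0.
Proof. by move=> B _; apply/commr_sym/commr0. Qed.
Lemma bicM A B : Bic A -> Bic B -> Bic (A * B).
Proof.
move=> hA hB C hC; rewrite /GRing.comm -mulrA (hB C hC) !mulrA (hA C hC) //.
Qed.
Lemma bicD A B : Bic A -> Bic B -> Bic (A + B).
Proof. by move=> hA hB C hC; apply: commr_sym; apply: commrD; apply: commr_sym; [apply: hA|apply: hB]. Qed.
Lemma bicZ c A : Bic A -> Bic (c *: A).
Proof. by move=> hA C hC; rewrite /GRing.comm -sAl -sAr (hA C hC). Qed.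
Lemma bicX A m : Bic A -> Bic (A ^+ m).
Proof. by move=> hA; elim: m => [|m IH]; [rewrite expr0; apply: bic1|rewrite exprS; apply: bicM]. Qed.

Lemma nil0 : Nilp 0.
Proof. by exists 1%N; rewrite expr1. Qed.

Lemma nilMl A B : GRing.comm A B -> Nilp A -> Nilp (A * B).
Proof. by move=> c [m hm]; exists m; rewrite exprMn_comm // hm mul0r. Qed.

Lemma nilMr A B : GRing.comm A B -> Nilp B -> Nilp (A * B).
Proof. by move=> c [m hm]; exists m; rewrite exprMn_comm // hm mulr0. Qed.

Lemma nilZ c A : Nilp A -> Nilp (c *: A).
Proof. by move=> [m hm]; exists m; rewrite exprZ hm scaler0. Qed.

Lemma nilD A B : GRing.comm A B -> Nilp A -> Nilp B -> Nilp (A + B).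
Proof.
move=> c [a ha] [b hb]; exists (a + b)%N; rewrite exprDn_comm //.
have ge : forall (X : T) (k l : nat), X ^+ k = 0 -> (k <= l)%N -> X ^+ l = 0.
  by move=> X k l hk hl; rewrite -(subnKC hl) exprD hk mul0r.
apply: big1 => i _.
case: (ltnP i b) => hi.
  rewrite (ge A a) ?mul0r ?mul0rn //.
  by rewrite -addnBA ?leq_addr // ltnW.
by rewrite (ge B b _ hb hi) mulr0 mul0rn.
Qed.

Lemma nil_prod (F : 'I_d -> T) k0 : (forall k, Bic (F k)) -> Nilp (F k0) ->
  Nilp (\prod_(k < d) F k).
Proof.
move=> hF hk0.
have bp : forall s, Bic (\prod_(k <- s) F k).
  elim=> [|a s IH]; rewrite ?big_nil ?big_cons; [exact: bic1|exact: bicM].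
suff : forall s, k0 \in s -> Nilp (\prod_(k <- s) F k) by apply; rewrite mem_index_enum.
elim => [//|a s IH]; rewrite in_cons big_cons => /orP[/eqP e|hs].
  by rewrite -e; apply: nilMl hk0; apply: bic_comm; rewrite ?e.
by apply: nilMr (IH hs); apply: bic_comm.
Qed.

Lemma bic_prod (F : 'I_d -> T) : (forall k, Bic (F k)) -> Bic (\prod_(k < d) F k).
Proof. by move=> hF; apply: big_ind; [exact: bic1|exact: bicM|]. Qed.

Lemma decomp (D : nat) (c : {ffun 'I_d -> 'I_D.+1} -> K) (e0 : {ffun 'I_d -> 'I_D.+1}) :
  (forall k, e0 k = 0 :> nat) ->
  exists M : T, Nilp M /\ \sum_e c e *: \prod_(k < d) W k ^+ e k = c e0 *: (1 : T) + M.
Proof.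
move=> h0; rewrite (bigD1 e0) //=.
exists (\sum_(e | e != e0) c e *: \prod_(k < d) W k ^+ e k); split; last first.
  by congr (_ *: _ + _); apply: big1 => k _; rewrite h0 expr0.
suff : Bic (\sum_(e | e != e0) c e *: \prod_(k < d) W k ^+ e k) /\
       Nilp (\sum_(e | e != e0) c e *: \prod_(k < d) W k ^+ e k) by case.
apply: (big_ind (fun A => Bic A /\ Nilp A)) => [|A B [hA nA] [hB nB]|e he]; first by split; [exact: bic0|exact: nil0].
  by split; [exact: bicD|apply: nilD => //; exact: bic_comm].
have bt : Bic (\prod_(k < d) W k ^+ e k) by apply: bic_prod => k; apply/bicX/bicW.
split; first exact: bicZ.
apply: nilZ.
have [k0 hk0] : exists k, (e k : nat) != 0%N.
  apply/existsP; apply: contraR he => /existsPn hn.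
  apply/eqP/ffunP => k; apply: val_inj; rewrite /= h0; exact/eqP/negbNE/hn.
apply: (nil_prod (k0 := k0)) => [k|]; first exact/bicX/bicW.
have [m hm] := Wn k0; exists m.
by rewrite exprAC hm expr0n (negbTE hk0).
Qed.
End Alg.


Lemma mono_inj (R : realFieldType) (m : nat) (y : nat -> R) :
  (forall j, (j < m)%N -> y j < y j.+1) ->
  forall i j, (i <= m)%N -> (j <= m)%N -> y i = y j -> i = j.
Proof.
move=> hy.
have lt : forall i j, (i < j)%N -> (j <= m)%N -> y i < y j.
  move=> i; elim=> [//|j IH] hij hj.
  rewrite ltnS leq_eqVlt in hij; case/orP: hij => [/eqP ->|hij]; first exact: hy.
  by apply: lt_trans (IH hij (ltnW hj)) (hy _ hj).
move=> i j hi hj e; case: (ltngtP i j) => // h.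
  by have := lt _ _ h hj; rewrite e ltxx.
by have := lt _ _ h hi; rewrite e ltxx.
Qed.

Lemma unitmxX (R : fieldType) N (A : 'M[R]_N) m : A \in unitmx -> A ^+ m \in unitmx.
Proof.
move=> hA; elim: m => [|m IH]; first by rewrite expr0 -idmxE unitmx1.
by rewrite exprS -mulmxE unitmx_mul hA IH.
Qed.

Lemma Ndim_gt0 n d : (0 < Ndim n d)%N.
Proof. by elim: d => //= d IH; rewrite muln_gt0 IH. Qed.

Theorem mainTheorem10 (R : realFieldType) (d : nat) (n : nat -> nat)
  (x : nat -> nat -> R)
  (hn : forall k, (k < d)%N -> (1 <= n k)%N)
  (hx : forall k j, (k < d)%N -> (j < n k)%N -> x k j < x k j.+1)
  (D : nat) (c : {ffun 'I_d -> 'I_D.+1} -> R) :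
  (\rank (polyW n x c) = Ndim n d) <-> c (const_exp d D) != 0.
Proof.
have hZ : forall k, (k < d)%N -> Zhat (n k) (x k) ^+ (n k).+1 = 0.
  by move=> k hk; apply: Zhat_nil; apply: mono_inj => j hj; apply: hx.
pose W := fun k : 'I_d => Wmat n x d k.
have Wc : forall a b, GRing.comm (W a) (W b).
  by move=> a b; apply: Wmat_comm.
have Wn : forall a, exists m, W a ^+ m = 0.
  by move=> a; exists (n a).+1; apply: Wmat_nil => //; apply: hZ.
have [M [[m hm] e]] := decomp Wc Wn c (e0 := const_exp d D) (fun k => congr1 val (ffunE _ _)).
rewrite /polyW e; split.
  move=> hr; apply/negP => /eqP h0; move: hr; rewrite h0 scale0r add0r => hr.
  have : M \in unitmx by rewrite -row_free_unit /row_free hr.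
  move=> /(unitmxX m); rewrite hm => /mxrank_unit; rewrite mxrank0 => hN.
  by have := Ndim_gt0 n d; rewrite -hN.
move=> hc; apply: mxrank_unit.
pose y := - (c (const_exp d D))^-1 *: M.
have hy : y ^+ m = 0 by rewrite exprZ hm scaler0.
have : (1 - y) * \sum_(i < m) y ^+ i = 1.
  by have := subrX1 y m; rewrite hy sub0r -opprB mulNr => /oppr_inj <-.
move=> h1.
have [] := @mulmx1_unit _ _ (c (const_exp d D) *: (1 : 'M[R]_(Ndim n d)) + M) ((c (const_exp d D))^-1 *: \sum_(i < m) y ^+ i) => //.
rewrite mulmxE idmxE; transitivity ((1 - y) * \sum_(i < m) y ^+ i); last exact: h1.
rewrite -sAr sAl; congr (_ * _).
by rewrite scalerDr scalerA mulVf // scale1r /y scaleNr opprK.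
Qed.
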